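(* Let $f$, $u_{0s}$, $c_0$, $b_0$, $p$ be as in the context and assume $M:=\sup_{x\le0}|b_0(x)c_0(x)|<\infty$. Then for every $\sigma\in\mathbb{C}$ with $\Re(\sigma)>M/c_0(0)$, $$\int_{-\infty}^{0}b_0(\xi)e^{-\sigma p(\xi)}\,d\xi\neq c_0(0);$$ that is, there are no eigenvalues (roots of the dispersion relation) with real part exceeding $M/c_0(0)$.
   Context: Let $q>0$ and let $f:(-\infty,0]\times(0,\infty)\to[0,\infty)$ be such that for each $u>0$, $x\mapsto f(x,u)$ is continuous and integrable, $\partial f/\partial u$ exists and is continuous, and $\int_{-\infty}^0 f(x,u)\,dx=q/2$ independently of $u$. Let $u_{0s}=2\sqrt q$. Define $c_0(x)=\sqrt{2\int_{-\infty}^x f(y,u_{0s})\,dy}$ for $x\le0$ (so $c_0(0)=u_{0s}/2$), and assume $c_0(x)>0$ for all $x\le0$. Define $b_0(x)=\frac{\partial f}{\partial u}(x,u_{0s})+\frac{f(x,u_{0s})}{2c_0(x)}$ and $p(x)=\int_x^0 dy/c_0(y)$. An eigenvalue is a $\sigma$ with $\Re\sigma>0$ satisfying $\int_{-\infty}^{0}b_0(\xi)e^{-\sigma p(\xi)}d\xi=c_0(0)$. *)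

(* Defs.v *)
From Stdlib Require Export Reals Lra ClassicalEpsilon.
Open Scope R_scope.

(* Proper Riemann integral value (proof-irrelevant); unspecified if not integrable. *)
Definition is_RInt (g : R -> R) (a b l : R) : Prop :=
  exists pr : Riemann_integrable g a b, RiemannInt pr = l.

Definition RInt (g : R -> R) (a b : R) : R :=
  epsilon (inhabits 0) (fun l => is_RInt g a b l).

Definition is_improper_int (g : R -> R) (x l : R) : Prop :=
  (forall a, a <= x -> exists pr : Riemann_integrable g a x, True) /\
  (forall eps, 0 < eps -> exists A, forall a, a <= A -> a <= x ->
      forall pr : Riemann_integrable g a x, Rabs (RiemannInt pr - l) < eps).

Definition improper_int (g : R -> R) (x : R) : R :=
  epsilon (inhabits 0) (fun l => is_improper_int g x l).

Definition c0 (f : R -> R -> R) (u0s x : R) : R :=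
  sqrt (2 * improper_int (fun y => f y u0s) x).

(* b_0(x) = df/du (x,u0s) + f(x,u0s) / (2 c_0(x)) ; fu is the partial derivative. *)
Definition b0 (f fu : R -> R -> R) (u0s x : R) : R :=
  fu x u0s + f x u0s / (2 * c0 f u0s x).

Definition pfun (f : R -> R -> R) (u0s x : R) : R :=
  RInt (fun y => / c0 f u0s y) x 0.

(* sigma = a + i b is an eigenvalue (Re sigma = a > 0) iff
   int_{-infty}^0 b0(xi) e^{-sigma p(xi)} dxi = c0(0), written out in real and
   imaginary parts: e^{-sigma p} = e^{-a p} (cos (b p) - i sin (b p)). *)
Definition dispersion_root (f fu : R -> R -> R) (u0s a b : R) : Prop :=
  is_improper_int
    (fun xi => b0 f fu u0s xi * exp (- a * pfun f u0s xi) * cos (b * pfun f u0s xi))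
    0 (c0 f u0s 0) /\
  is_improper_int
    (fun xi => - (b0 f fu u0s xi * exp (- a * pfun f u0s xi) * sin (b * pfun f u0s xi)))
    0 0.

(* Main.v *)
Require Import Defs.
From Coquelicot Require Import Coquelicot.

Lemma cont_ed (f : R -> R) x :
  (forall eps, 0 < eps -> exists delta, 0 < delta /\ forall y, Rabs (y - x) < delta -> Rabs (f y - f x) < eps) ->
  continuous f x.
Proof.
  intro H. apply continuity_pt_filterlim. apply continuity_pt_locally.
  intros [e He]. destruct (H e He) as [d [Hd Hy]].
  exists (mkposreal d Hd). intros y Hb. apply Hy. exact Hb.
Qed.

Lemma rmin_lip x y : Rabs (Rmin y 0 - Rmin x 0) <= Rabs (y - x).
Proof. unfold Rmin; destruct (Rle_dec y 0); destruct (Rle_dec x 0); split_Rabs; lra. Qed.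

Lemma cont_rmin x : continuous (fun y => Rmin y 0) x.
Proof. apply cont_ed. intros e He. exists e. split; auto. intros y Hy. eapply Rle_lt_trans. apply rmin_lip. exact Hy. Qed.

Lemma improper_unique g x l1 l2 : is_improper_int g x l1 -> is_improper_int g x l2 -> l1 = l2.
Proof.
  intros [I1 L1] [_ L2]. destruct (Req_dec l1 l2) as [|Hne]; auto. exfalso.
  assert (He : 0 < Rabs (l1 - l2) / 2) by (apply Rabs_pos_lt in Hne; [lra| lra] || (assert (l1 - l2 <> 0) by lra; apply Rabs_pos_lt in H; lra)).
  destruct (L1 _ He) as [A1 H1]. destruct (L2 _ He) as [A2 H2].
  set (a := Rmin (Rmin A1 A2) x).
  assert (ha1 : a <= A1) by (unfold a; repeat (apply Rmin_glb_lt || idtac); apply Rle_trans with (Rmin A1 A2); [apply Rmin_l| apply Rmin_l]).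
  assert (ha2 : a <= A2) by (unfold a; apply Rle_trans with (Rmin A1 A2); [apply Rmin_l| apply Rmin_r]).
  assert (hax : a <= x) by (unfold a; apply Rmin_r).
  destruct (I1 a hax) as [pr _].
  specialize (H1 a ha1 hax pr). specialize (H2 a ha2 hax pr).
  revert H1 H2 He. split_Rabs; lra.
Qed.

Lemma improper_val g x l : is_improper_int g x l -> improper_int g x = l.
Proof.
  intro H. unfold improper_int. apply improper_unique with g x; auto.
  apply epsilon_spec. exists l; exact H.
Qed.

Lemma Defs_RInt_val g a b (pr : Riemann_integrable g a b) : Defs.RInt g a b = RiemannInt pr.
Proof.
  unfold Defs.RInt.
  assert (H : Defs.is_RInt g a b (epsilon (inhabits 0) (fun l => Defs.is_RInt g a b l))).
  { apply epsilon_spec. exists (RiemannInt pr). exists pr. reflexivity. }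
  destruct H as [pr' H]. rewrite <- H. apply RiemannInt_P5.
Qed.
Theorem theorem2
  (q : R) (f fu : R -> R -> R) (M : R)
  (hq : 0 < q)
  (hf_nonneg : forall x u, x <= 0 -> 0 < u -> 0 <= f x u)
  (hf_cont : forall u, 0 < u -> forall x, x <= 0 -> forall eps, 0 < eps ->
      exists delta, 0 < delta /\ forall y, y <= 0 -> Rabs (y - x) < delta ->
        Rabs (f y u - f x u) < eps)
  (hf_int : forall u, 0 < u -> is_improper_int (fun x => f x u) 0 (q / 2))
  (hfu_deriv : forall x u, x <= 0 -> 0 < u ->
      derivable_pt_lim (fun v => f x v) u (fu x u))
  (hfu_cont : forall x u, x <= 0 -> 0 < u -> forall eps, 0 < eps ->
      exists delta, 0 < delta /\ forall x' u', x' <= 0 -> 0 < u' ->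
        Rabs (x' - x) < delta -> Rabs (u' - u) < delta ->
        Rabs (fu x' u' - fu x u) < eps)
  (hc0_pos : forall x, x <= 0 -> 0 < c0 f (2 * sqrt q) x)
  (hM : is_lub (fun y => exists x, x <= 0 /\
          y = Rabs (b0 f fu (2 * sqrt q) x * c0 f (2 * sqrt q) x)) M) :
  forall a b : R, M / c0 f (2 * sqrt q) 0 < a ->
    ~ dispersion_root f fu (2 * sqrt q) a b.
Proof.
  intros a b Ha [Hd _].
  set (u := 2 * sqrt q) in *.
  assert (hu : 0 < u) by (unfold u; generalize (sqrt_lt_R0 q hq); lra).
  set (gt := fun y => f (Rmin y 0) u).
  assert (gt_cont : forall x, continuous gt x).
  { intro x. apply cont_ed. intros e He.
    destruct (hf_cont u hu (Rmin x 0) (Rmin_r _ _) e He) as [d [Hd0 Hy]].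
    exists d. split; auto. intros y Hyx. unfold gt. apply Hy. apply Rmin_r.
    eapply Rle_lt_trans. apply rmin_lip. exact Hyx. }
  assert (gt_ex : forall a b, ex_RInt gt a b).
  { intros. apply (@ex_RInt_continuous R_CompleteNormedModule). intros; apply gt_cont. }
  set (G := (fun x => RInt gt x 0) : R -> R).
  assert (G_der : forall x, is_derive G x (- gt x)).
  { intro x. apply (@is_derive_RInt' R_NormedModule gt G x 0). exists (mkposreal 1 Rlt_0_1). intros y _.
    exact (RInt_correct gt y 0 (gt_ex y 0)). apply gt_cont. }
  assert (G_cont : forall x, continuous G x).
  { intro x. apply (@ex_derive_continuous R_AbsRing R_NormedModule). eexists. apply G_der. }
  assert (F_val : forall y, y <= 0 -> improper_int (fun t => f t u) y = q/2 - G y).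
  { intros y Hy. apply improper_val. destruct (hf_int u hu) as [Iint L]. split.
    - intros a0 Ha0. exists (ex_RInt_Reals_0 _ _ _ (ex_RInt_ext gt _ a0 y
        ltac:(intros t Ht; unfold gt; rewrite Rmin_left; [reflexivity|];
              rewrite Rmin_left in Ht by lra; rewrite Rmax_right in Ht by lra; lra)
        (gt_ex a0 y))). exact I.
    - intros e He. destruct (L e He) as [A HA]. exists (Rmin A y). intros a0 Ha0 Ha0y pr.
      assert (ha0 : a0 <= A) by (eapply Rle_trans; [exact Ha0| apply Rmin_l]).
      assert (ha00 : a0 <= 0) by lra.
      destruct (Iint a0 ha00) as [pr0 _]. specialize (HA a0 ha0 ha00 pr0).
      rewrite <- (RInt_Reals _ _ _ pr). rewrite <- (RInt_Reals _ _ _ pr0) in HA.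
      assert (E1 : forall c, a0 <= c <= 0 -> RInt (fun t => f t u) a0 c = RInt gt a0 c).
      { intros c Hc. apply RInt_ext. intros t Ht. unfold gt. rewrite Rmin_left; [reflexivity|].
        rewrite Rmin_left in Ht by lra; rewrite Rmax_right in Ht by lra; lra. }
      rewrite E1 by lra. rewrite E1 in HA by lra.
      rewrite <- (RInt_Chasles gt a0 y 0 (gt_ex _ _) (gt_ex _ _)) in HA.
      unfold G. replace (RInt gt a0 y - (q / 2 - RInt gt y 0)) with (plus (RInt gt a0 y) (RInt gt y 0) - q/2).
      exact HA. unfold plus; simpl. ring. }
  set (ct := fun y => sqrt (q - 2 * G (Rmin y 0))).
  assert (c0_eq : forall y, y <= 0 -> c0 f u y = ct y).
  { intros y Hy. unfold c0. rewrite F_val by exact Hy. unfold ct. rewrite Rmin_left by exact Hy.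
    f_equal. lra. }
  assert (ct_pos : forall y, 0 < ct y).
  { intro y. replace (ct y) with (c0 f u (Rmin y 0)). apply hc0_pos, Rmin_r.
    rewrite c0_eq by apply Rmin_r. unfold ct. rewrite (Rmin_left (Rmin y 0) 0) by apply Rmin_r. reflexivity. }
  assert (ct_cont : forall x, continuous ct x).
  { intro x. apply continuous_sqrt_comp.
    apply (continuous_comp (fun y => Rmin y 0) (fun z => q - 2 * G z)). apply cont_rmin.
    apply continuity_pt_filterlim. apply continuity_pt_minus. apply continuity_pt_const.
    intros s t; reflexivity. apply continuity_pt_scal. apply continuity_pt_filterlim, G_cont. }
  set (ht := fun y => / ct y).
  assert (ht_cont : forall x, continuous ht x).
  { intro x. apply continuous_Rinv_comp. apply ct_cont. generalize (ct_pos x); lra. }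
  assert (ht_ex : forall a b, ex_RInt ht a b).
  { intros. apply (@ex_RInt_continuous R_CompleteNormedModule). intros; apply ht_cont. }
  set (Pt := (fun x => RInt ht x 0) : R -> R).
  assert (Pt_der : forall x, is_derive Pt x (- ht x)).
  { intro x. apply (@is_derive_RInt' R_NormedModule ht Pt x 0). exists (mkposreal 1 Rlt_0_1). intros y _.
    exact (RInt_correct ht y 0 (ht_ex y 0)). apply ht_cont. }
  assert (Pt_cont : forall x, continuous Pt x).
  { intro x. apply (@ex_derive_continuous R_AbsRing R_NormedModule). eexists. apply Pt_der. }
  assert (p_eq : forall x, x <= 0 -> pfun f u x = Pt x).
  { intros x Hx. unfold pfun.
    assert (Hag : forall t, Rmin x 0 < t /\ t < Rmax x 0 -> ht t = / c0 f u t).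
    { intros t Ht. rewrite Rmin_left in Ht by exact Hx. rewrite Rmax_right in Ht by exact Hx.
      unfold ht. rewrite c0_eq by lra. reflexivity. }
    pose (pr := ex_RInt_Reals_0 _ _ _ (ex_RInt_ext ht (fun y => / c0 f u y) x 0 Hag (ht_ex x 0))).
    rewrite (Defs_RInt_val _ _ _ pr). rewrite <- RInt_Reals. unfold Pt. symmetry. apply RInt_ext. exact Hag. }
  assert (c00 : 0 < c0 f u 0) by (apply hc0_pos; lra).
  assert (Mnn : 0 <= M).
  { destruct hM as [Hub _]. apply Rle_trans with (Rabs (Defs.b0 f fu u 0 * c0 f u 0)).
    apply Rabs_pos. apply Hub. exists 0. split; [lra| reflexivity]. }
  assert (apos : 0 < a).
  { apply Rle_lt_trans with (M / c0 f u 0); auto. unfold Rdiv; apply Rmult_le_pos; [lra| left; apply Rinv_0_lt_compat; lra]. }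
  assert (Mlt : M / a < c0 f u 0).
  { assert (M < a * c0 f u 0).
    { replace M with (M / c0 f u 0 * c0 f u 0) by (field; lra). nra. }
    assert (a * / a = 1) by (field; lra). unfold Rdiv. nra. }
  set (k := fun x => a * ht x * exp (- a * Pt x)).
  set (E := fun x => exp (- a * Pt x)).
  assert (E_der : forall x, is_derive E x (k x)).
  { intro x.
    assert (H1 : is_derive (fun x => -a * Pt x) x (-a * - ht x)) by (apply is_derive_scal; apply Pt_der).
    assert (H2 := is_derive_comp exp (fun x => -a*Pt x) x (exp (-a*Pt x)) _ (is_derive_exp _) H1).
    replace (k x) with (scal (-a * - ht x) (exp (-a * Pt x))). exact H2.
    unfold k, scal; simpl; unfold mult; simpl; ring. }
  assert (k_cont : forall x, continuous k x).
  { intro x. apply (continuous_mult (fun y => a * ht y) (fun y => exp (-a * Pt y))).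
    apply (continuous_mult (fun _ => a) ht). apply continuous_const. apply ht_cont.
    apply continuous_exp_comp. apply (continuous_mult (fun _ => -a) Pt). apply continuous_const. apply Pt_cont. }
  assert (k_ex : forall a b, ex_RInt k a b).
  { intros. apply (@ex_RInt_continuous R_CompleteNormedModule). intros; apply k_cont. }
  assert (k_le : forall A0, A0 <= 0 -> RInt k A0 0 <= 1).
  { intros A0 HA0.
    assert (H := @is_RInt_derive R_CompleteNormedModule E k A0 0 (fun x _ => E_der x) (fun x _ => k_cont x)).
    rewrite (is_RInt_unique _ _ _ _ H). unfold minus, plus, opp; simpl. unfold E.
    assert (Pt 0 = 0) by (unfold Pt; apply (RInt_point 0 ht)).
    rewrite H0. rewrite Rmult_0_r, exp_0. generalize (exp_pos (- a * Pt A0)). lra. }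
  destruct Hd as [Hint Hlim].
  destruct (Hlim (c0 f u 0 - M / a)) as [A HA]. lra.
  set (A0 := Rmin A 0).
  assert (HA0 : A0 <= 0) by apply Rmin_r.
  destruct (Hint A0 HA0) as [pr _].
  specialize (HA A0 (Rmin_l _ _) HA0 pr).
  rewrite <- RInt_Reals in HA.
  assert (Hle : RInt (fun xi => Defs.b0 f fu u xi * exp (- a * pfun f u xi) * cos (b * pfun f u xi)) A0 0 <= M / a).
  { eapply Rle_trans. apply (RInt_le _ (fun x => M / a * k x) A0 0 HA0).
    apply (ex_RInt_Reals_1 _ _ _ pr).
    apply (@ex_RInt_continuous R_CompleteNormedModule). intros; apply (continuous_mult (fun _ => M/a) k).
    apply continuous_const. apply k_cont.
    { intros x [Hx1 Hx2]. rewrite p_eq by lra. unfold k, ht. rewrite <- c0_eq by lra.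
      set (B := Defs.b0 f fu u x). set (C := c0 f u x). set (e := exp (- a * Pt x)). set (cs := cos (b * Pt x)).
      assert (HC : 0 < C) by (apply hc0_pos; lra).
      assert (He : 0 < e) by apply exp_pos.
      assert (Hcs : Rabs cs <= 1) by (apply Rabs_le, COS_bound).
      assert (HBC : Rabs (B * C) <= M).
      { destruct hM as [Hub _]. apply Hub. exists x. split; [lra| reflexivity]. }
      rewrite Rabs_mult, (Rabs_right C) in HBC by lra.
      assert (HB : Rabs B <= M * / C).
      { assert (C * / C = 1) by (field; lra). assert (0 < / C) by (apply Rinv_0_lt_compat; lra). nra. }
      replace (M / a * (a * / C * e)) with (M * / C * e) by (field; lra).
      assert (B * e * cs <= Rabs B * e).
      { assert (B * cs <= Rabs B) .
        { apply Rle_trans with (Rabs (B * cs)). apply Rle_abs. rewrite Rabs_mult.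
          assert (0 <= Rabs B) by apply Rabs_pos. nra. }
        nra. }
      nra. }
    replace (RInt (fun x => M / a * k x) A0 0) with (scal (M / a) (RInt k A0 0)).
    unfold scal; simpl; unfold mult; simpl.
    assert (0 <= M / a) by (unfold Rdiv; apply Rmult_le_pos; [lra| left; apply Rinv_0_lt_compat; lra]).
    generalize (k_le A0 HA0). nra.
    rewrite <- RInt_scal. reflexivity. apply k_ex. }
  revert HA Hle. split_Rabs; lra.
Qed.
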